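(* Suppose $\mathit{Act}$ is finite. Then $\mathcal{E}_{v,f}'$ is sound modulo $\simeq$: for all monitors $m,n$, if $\mathcal{E}_{v,f}'\vdash m=n$ then $m\simeq n$.
   Context: Monitors: terms $m,n ::= v \mid a.m \mid m+n \mid x$ over a finite nonempty action set $\mathit{Act}$ and variables $x$, verdicts $v::=\mathit{end}\mid\mathit{yes}\mid\mathit{no}$. $\sum_{i\in I}m_i$ is $\mathit{end}$ for $I=\emptyset$. Semantics: $\xrightarrow{\alpha}$ ($\alpha\in\mathit{Act}\cup\{\tau\}$) is the least relation with $a.m\xrightarrow{a}m$; $m\xrightarrow{\alpha}m'$ implies $m+n\xrightarrow{\alpha}m'$ and $n+m\xrightarrow{\alpha}m'$; $v\xrightarrow{\alpha}v$ for verdicts $v$. Weak transitions: $m\xRightarrow{\varepsilon}m'$ iff $m(\xrightarrow{\tau})^*m'$; $m\xRightarrow{a}m'$ iff $m\xRightarrow{\varepsilon}\xrightarrow{a}\xRightarrow{\varepsilon}m'$; $m\xRightarrow{as'}m'$ ($s'\ne\varepsilon$) iff $m\xRightarrow{a}m_1\xRightarrow{s'}m'$. For closed $m$, $L_a(m)=\{s\mid m\xRightarrow{s}\mathit{yes}\}$, $L_r(m)=\{s\mid m\xRightarrow{s}\mathit{no}\}$; $m\simeq n$ iff $L_a,L_r$ coincide for closed terms, and iff $\sigma(m)\simeq\sigma(n)$ for all closed substitutions $\sigma$ for open terms. Notation for $s\in\mathit{Act}^*$: $s.m$ is $a_1.(\cdots a_k.m)$ if $s=a_1\dots a_k$ ($\varepsilon.m=m$);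 $s^1=s$, $s^i=s s^{i-1}$; $\mathit{pre}(s)$ is the set of prefixes of $s$ (including $\varepsilon$ and $s$); $\overline{s}^{\le}(m)=\sum_{s'\in\mathit{Act}^*,\ |s'|\le|s|,\ s'\notin\mathit{pre}(s)}s'.m$; $\overline{s}(m)=\overline{s}^{\le}(m)+s.\sum_{a\in\mathit{Act}}a.m$; for $k\ge1$, $\overline{s}^{(1)}(m)=\overline{s}(m)$ and for $k\ge2$, $\overline{s}^{(k)}(m)=\sum_{1\le i<k-1}s^i.\overline{s}^{\le}(m)+s^{k-1}.\overline{s}(m)$. $\mathcal{E}\vdash m=n$ denotes derivability by reflexivity, symmetry, transitivity, substitution and congruence for $a.\_$ and $+$. $\mathcal{E}_v$: (A1) $x+y=y+x$; (A2) $x+(y+z)=(x+y)+z$; (A3) $x+x=x$; (A4) $x+\mathit{end}=x$; for each $a\in\mathit{Act}$: ($E_a$) $a.\mathit{end}=\mathit{end}$; ($Y_a$) $\mathit{yes}=\mathit{yes}+a.\mathit{yes}$; ($N_a$) $\mathit{no}=\mathit{no}+a.\mathit{no}$; ($D_a$) $a.(x+y)=a.x+a.y$. $\mathcal{E}_v'=\mathcal{E}_v\cup\{O1\}$ with (O1) $\mathit{yes}+\mathit{no}=\mathit{yes}+\mathit{no}+x$. $\mathcal{O}=\{O2_{s,k}\mid s\in\mathit{Act}^*,k\ge1\}$ with ($O2_{s,k}$) $x+s.x+\overline{s}^{(k)}(\mathit{yes}+\mathit{no})=x+\overline{s}^{(k)}(\mathit{yes}+\mathit{no})$. $\mathcal{E}_{v,f}'=\mathcal{E}_v'\cup\mathcal{O}$.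 *)

(* Defs.v *)
From mathcomp Require Import all_boot.
Set Implicit Arguments.
Unset Strict Implicit.
Unset Printing Implicit Defensive.

Section Monitors.
Variable Act : finType.

Inductive verdict := vend | vyes | vno.

Inductive mon : Type :=
| Verd : verdict -> mon
| Pref : Act -> mon -> mon
| Sum  : mon -> mon -> mon
| Var  : nat -> mon.

Definition mend := Verd vend.
Definition myes := Verd vyes.
Definition mno  := Verd vno.

Fixpoint closed (m : mon) : bool :=
  match m with
  | Verd _ => true
  | Pref _ m => closed m
  | Sum m n => closed m && closed n
  | Var _ => false
  end.

Fixpoint subst (sigma : nat -> mon) (m : mon) : mon :=
  match m with
  | Verd v => Verd v
  | Pref a m => Pref a (subst sigma m)
  | Sum m n => Sum (subst sigma m) (subst sigma n)
  | Var x => sigma x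
  end.

(** Labelled transitions; [None] is tau, [Some a] is the action a. *)
Inductive step : mon -> option Act -> mon -> Prop :=
| st_pref a m : step (Pref a m) (Some a) m
| st_suml m n al m' : step m al m' -> step (Sum m n) al m'
| st_sumr m n al m' : step m al m' -> step (Sum n m) al m'
| st_verd v al : step (Verd v) al (Verd v).

Inductive taustar : mon -> mon -> Prop :=
| ts_refl m : taustar m m
| ts_step m m1 m' : step m None m1 -> taustar m1 m' -> taustar m m'.

Definition wstep1 (m : mon) (a : Act) (m' : mon) : Prop :=
  exists m1 m2, taustar m m1 /\ step m1 (Some a) m2 /\ taustar m2 m'.

Fixpoint wtrace (m : mon) (s : seq Act) (m' : mon) : Prop :=
  match s with
  | [::] => taustar m m'
  | a :: s' =>
      match s' with
      | [::] => wstep1 m a m'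
      | _ :: _ => exists m1, wstep1 m a m1 /\ wtrace m1 s' m'
      end
  end.

Definition La (m : mon) (s : seq Act) : Prop := wtrace m s myes.
Definition Lr (m : mon) (s : seq Act) : Prop := wtrace m s mno.

Definition closed_equiv (m n : mon) : Prop :=
  (forall s, La m s <-> La n s) /\ (forall s, Lr m s <-> Lr n s).

Definition mequiv (m n : mon) : Prop :=
  forall sigma : nat -> mon, (forall x, closed (sigma x)) ->
    closed_equiv (subst sigma m) (subst sigma n).

Inductive derivable (E : mon -> mon -> Prop) : mon -> mon -> Prop :=
| d_ax l r : E l r -> derivable E l r
| d_refl m : derivable E m m
| d_sym m n : derivable E m n -> derivable E n m
| d_trans m n p : derivable E m n -> derivable E n p -> derivable E m p
| d_subst sigma m n : derivable E m n ->
    derivable E (subst sigma m) (subst sigma n)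
| d_pref a m n : derivable E m n -> derivable E (Pref a m) (Pref a n)
| d_sum m m' n n' : derivable E m m' -> derivable E n n' ->
    derivable E (Sum m n) (Sum m' n').

Fixpoint bigsum (l : seq mon) : mon :=
  match l with
  | [::] => mend
  | [:: m] => m
  | m :: l' => Sum m (bigsum l')
  end.

Definition prefs (s : seq Act) (m : mon) : mon := foldr Pref m s.

Definition spow (s : seq Act) (i : nat) : seq Act := flatten (nseq i s).

Fixpoint words (n : nat) : seq (seq Act) :=
  match n with
  | 0 => [:: [::]]
  | n'.+1 => [seq a :: w | a <- enum Act, w <- words n']
  end.
Definition words_le (n : nat) : seq (seq Act) :=
  flatten [seq words i | i <- iota 0 n.+1].

Definition sbar_le (s : seq Act) (m : mon) : mon :=
  bigsum [seq prefs s' m | s' <- words_le (size s) & ~~ prefix s' s].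

Definition sbar (s : seq Act) (m : mon) : mon :=
  Sum (sbar_le s m) (prefs s (bigsum [seq Pref a m | a <- enum Act])).

Definition sbar_k (s : seq Act) (k : nat) (m : mon) : mon :=
  match k with
  | 0 | 1 => sbar s m
  | _ => Sum (bigsum [seq prefs (spow s i) (sbar_le s m) | i <- iota 1 (k - 2)])
             (prefs (spow s k.-1) (sbar s m))
  end.

Definition vx := Var 0.
Definition vy := Var 1.
Definition vz := Var 2.
Definition yn := Sum myes mno.

Inductive Evf' : mon -> mon -> Prop :=
| A1 : Evf' (Sum vx vy) (Sum vy vx)
| A2 : Evf' (Sum vx (Sum vy vz)) (Sum (Sum vx vy) vz)
| A3 : Evf' (Sum vx vx) vx
| A4 : Evf' (Sum vx mend) vx
| Ea a : Evf' (Pref a mend) mend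
| Ya a : Evf' myes (Sum myes (Pref a myes))
| Na a : Evf' mno (Sum mno (Pref a mno))
| Da a : Evf' (Pref a (Sum vx vy)) (Sum (Pref a vx) (Pref a vy))
| O1 : Evf' yn (Sum yn vx)
| O2 s k : 1 <= k ->
    Evf' (Sum (Sum vx (prefs s vx)) (sbar_k s k yn)) (Sum vx (sbar_k s k yn)).

End Monitors.

(* Main.v *)
Require Import Defs.
From mathcomp Require Import all_boot.
From Stdlib Require List.
From mathcomp Require Import zify.
Set Implicit Arguments. Unset Strict Implicit.

Section S1.
Variable Act : finType.
Notation mon := (mon Act).
Notation Verd := (@Verd Act).

Fixpoint den (rho : nat -> verdict -> seq Act -> Prop) (m : mon) (v : verdict) (w : seq Act) : Prop :=
  match m with
  | Defs.Verd u => u = v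
  | Pref a m => match w with [::] => False | b :: w' => b = a /\ den rho m v w' end
  | Sum p q => den rho p v w \/ den rho q v w
  | Var x => rho x v w
  end.

Definition good (rho : nat -> verdict -> seq Act -> Prop) :=
  forall x v w u, rho x v w -> rho x v (w ++ u).

Lemma den_ext rho m v w u : good rho -> den rho m v w -> den rho m v (w ++ u).
Proof.
move=> G; elim: m w => [r|a m IH|p IHp q IHq|x] w /=.
- by [].
- case: w => [|b w'] //= [-> H]; split=> //; exact: IH.
- by case=> H; [left; apply: IHp|right; apply: IHq].
- exact: G.
Qed.

Lemma den_subst rho sigma m v w :
  den rho (subst sigma m) v w <-> den (fun x => den rho (sigma x)) m v w.
Proof.
elim: m w => [r|a m IH|p IHp q IHq|x] w /=; try tauto.
- case: w => [|b w'] //=; have := IH w'; tauto.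
- have := IHp w; have := IHq w; tauto.
Qed.

Definition rho0 : nat -> verdict -> seq Act -> Prop := fun _ _ _ => False.

Lemma good0 : good rho0. Proof. by []. Qed.

Lemma step_tau m m1 : step m None m1 -> exists v, m1 = Verd v /\ den rho0 m v [::].
Proof.
move=> H; remember None as al eqn:E; elim: H E => /=.
- by [].
- move=> ? ? ? ? _ IH E; have [v [-> H]] := IH E; exists v; tauto.
- move=> ? ? ? ? _ IH E; have [v [-> H]] := IH E; exists v; tauto.
- by move=> v ? _; exists v.
Qed.

Lemma tau_step m v : den rho0 m v [::] -> step m None (Verd v).
Proof.
elim: m => [r|a m IH|p IHp q IHq|x] /=.
- move=> ->; exact: st_verd.
- by [].
- by case=> H; [apply: st_suml; apply: IHp|apply: st_sumr; apply: IHq].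
- by [].
Qed.

Lemma step_verd r al m2 : step (Verd r) al m2 -> m2 = Verd r.
Proof. by move=> H; inversion H. Qed.

Lemma taustar_inv m m' : taustar m m' -> m' = m \/ exists v, m' = Verd v /\ den rho0 m v [::].
Proof.
case=> [|m0 m1 m'' H1 H2]; first by left.
right; have [v [E D]] := step_tau H1; subst m1; exists v; split=> //.
move: D; remember (Verd v) as mv eqn:Ev; elim: H2 Ev => //.
move=> p p1 p' Hs _ IH Ev D; subst p; move/step_verd: Hs => Hs; subst p1; exact: IH.
Qed.

Lemma taustar_trans (m1 m2 m3 : mon) : taustar m1 m2 -> taustar m2 m3 -> taustar m1 m3.
Proof. elim=> // p p1 p' H _ IH /IH; exact: ts_step. Qed.

Lemma step_act m a w v :
  den rho0 m v (a :: w) <-> exists m2, step m (Some a) m2 /\ den rho0 m2 v w.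
Proof.
elim: m w => [r|b m IH|p IHp q IHq|x] w /=.
- split; first by move=> E; exists (Verd r); split; [exact: st_verd|exact: E].
  by case=> m2 [/step_verd -> ].
- split; first by case=> -> H; exists m; split => //; exact: st_pref.
  by case=> m2 [H D]; inversion H; subst.
- have := IHp w; have := IHq w; move=> [Hq1 Hq2] [Hp1 Hp2]; split.
  + case=> [/Hp1 [m2 [H D]]|/Hq1 [m2 [H D]]]; exists m2; split=> //;
     [exact: st_suml|exact: st_sumr].
  + case=> m2 [H D]; inversion H; subst; [left; apply: Hp2|right; apply: Hq2]; by exists m2.
- split=> // [[m2 [H _]]]; inversion H.
Qed.

Lemma wtrace_cons (m : mon) a w x :
  wtrace m (a :: w) x <-> exists m1, wstep1 m a m1 /\ wtrace m1 w x.
Proof.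
case: w => [|b w] /=; last by [].
split; first by move=> H; exists x; split => //; exact: ts_refl.
case=> m1 [[p [q [H1 [H2 H3]]]] H4]; exists p, q; split => //; split => //.
exact: taustar_trans H3 H4.
Qed.

Lemma den_tau m m' v w : taustar m m' -> den rho0 m' v w -> den rho0 m v w.
Proof.
case/taustar_inv => [->//|[u [-> D]]] /= E; subst u.
by have := den_ext w good0 D.
Qed.

Lemma wtrace_den m w v : wtrace m w (Verd v) <-> den rho0 m v w.
Proof.
elim: w m => [|a w IH] m.
- split => /=.
  + by case/taustar_inv => [<-|[u [[->] D]]].
  + move=> D; apply: ts_step (tau_step D) (ts_refl _).
- split.
  + move/wtrace_cons=> [m1 [[p [q [H1 [H2 H3]]]] /IH D]].
    apply: den_tau H1 _; apply/step_act; exists q; split=> //.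
    exact: den_tau H3 D.
  + case/step_act=> m2 [H D]; apply/wtrace_cons; exists m2; split; last by apply/IH.
    by exists m, m2; split; [exact: ts_refl|split=> //; exact: ts_refl].
Qed.
End S1.

Section S2.
Variable Act : finType.
Notation mon := (mon Act).

Lemma In_map (A B : Type) (f : A -> B) x (l : seq A) : Stdlib.Lists.List.In x l -> Stdlib.Lists.List.In (f x) (map f l).
Proof. elim: l => //= y l IH [->|H]; [by left|right; exact: IH]. Qed.

Lemma In_filter (A : Type) (p : pred A) x (l : seq A) : Stdlib.Lists.List.In x l -> p x -> Stdlib.Lists.List.In x (filter p l).
Proof. elim: l => //= y l IH [->|H] px; first by rewrite px; left.
by case: (p y) => /=; [right|]; apply: IH. Qed.

Lemma mem_In (T : eqType) (x : T) (l : seq T) : x \in l -> Stdlib.Lists.List.In x l.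
Proof. elim: l => //= y l IH; rewrite inE => /orP [/eqP ->|/IH]; [by left|by right]. Qed.

Lemma words_mem (t : seq Act) : t \in words Act (size t).
Proof.
elim: t => [|a t IH] /=; first by rewrite inE.
by apply/allpairsP; exists (a, t); split => //; rewrite mem_enum.
Qed.

Lemma words_le_mem (t : seq Act) n : size t <= n -> t \in words_le Act n.
Proof.
move=> H; apply/flatten_mapP; exists (size t); last exact: words_mem.
by rewrite mem_iota /= add0n ltnS.
Qed.

Lemma den_bigsum rho (l : seq mon) m v w : Stdlib.Lists.List.In m l -> den rho m v w -> den rho (bigsum l) v w.
Proof.
elim: l => //= x l IH [->|H] D.
- by case: l {IH} => //=; left.
- case: l IH H => //= y l IH H; right; exact: IH.
Qed.

Lemma den_prefs rho r (m : mon) v w : den rho m v w -> den rho (prefs r m) v (r ++ w).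
Proof. by elim: r => //= a r IH D; split => //; apply: IH. Qed.

Lemma den_prefs_inv rho r (m : mon) v w : den rho (prefs r m) v w -> exists u, w = r ++ u /\ den rho m v u.
Proof.
elim: r w => [|a r IH] w /=; first by move=> D; exists w.
case: w => //= b w [-> /IH [u [-> D]]]; by exists u.
Qed.

Lemma spowS (s : seq Act) i : spow s i.+1 = s ++ spow s i.
Proof. by []. Qed.

Lemma spow_add (s : seq Act) i j : spow s (i + j) = spow s i ++ spow s j.
Proof. by elim: i => //= i IH; rewrite !spowS IH catA. Qed.

Lemma decomp (s u : seq Act) : prefix u (s ++ u) \/
  exists j t z, u = spow s j ++ t ++ z /\ size t <= size s /\ ~~ prefix t s.
Proof.
case: s => [|c s0]; first by left; exact: prefix_refl.
set s := c :: s0.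
elim: {u}(size u).+1 {-2}u (ltnSn (size u)) => // N IH u Hu.
case: (boolP (prefix u s)) => Hp.
  by left; apply: prefix_trans Hp (prefix_prefix _ _).
case: (leqP (size u) (size s)) => Hs.
  by right; exists 0, u, [::]; rewrite cats0.
have Hu' : u = take (size s) u ++ drop (size s) u by rewrite cat_take_drop.
case: (eqVneq (take (size s) u) s) => Ht.
- have Hlt : size (drop (size s) u) < N.
    rewrite size_drop; move: Hu Hs; rewrite /s /=; lia.
  case: (IH _ Hlt) => [H|[j [t [z [E [H1 H2]]]]]].
  + left; rewrite Ht in Hu'; rewrite Hu' prefix_catr //.
    by rewrite eqxx.
  + right; exists j.+1, t, z; split => //; rewrite Ht in Hu'; by rewrite Hu' E spowS catA.
- right; exists 0, (take (size s) u), (drop (size s) u); split => //.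
  rewrite size_take Hs; split => //; apply/negP => /prefixP [r Er].
  move: Ht; rewrite {2}Er; suff -> : r = [::] by rewrite cats0 eqxx.
  by apply/eqP; rewrite -size_eq0; move/(f_equal size): Er; rewrite size_cat size_take Hs => /eqP; rewrite -{1}(addn0 (size s)) eqn_add2l eq_sym.
Qed.
End S2.

Section S3.
Variable Act : finType.
Notation mon := (mon Act).
Implicit Types (rho : nat -> verdict -> seq Act -> Prop).

Lemma yn_all rho v w : v <> vend -> den rho (yn Act) v w.
Proof. by case: v => //= _; [left|right]. Qed.

Lemma sbar_le_hit rho (s t z : seq Act) v : v <> vend -> size t <= size s -> ~~ prefix t s ->
  den rho (sbar_le s (yn Act)) v (t ++ z).
Proof.
move=> Hv H1 H2; apply: (@den_bigsum _ _ _ (prefs t (yn Act))).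
  apply: In_map; apply: In_filter => //; apply: mem_In; exact: words_le_mem.
apply: den_prefs; exact: yn_all.
Qed.

Lemma sbar_hit_ext rho (s z : seq Act) a v : v <> vend ->
  den rho (sbar s (yn Act)) v (s ++ a :: z).
Proof.
move=> Hv; right; apply: den_prefs.
apply: (@den_bigsum _ _ _ (Pref a (yn Act))).
  by apply: In_map; apply: mem_In; rewrite mem_enum.
by split => //; apply: yn_all.
Qed.

Lemma nonempty (x t z : seq Act) (s : seq Act) : ~~ prefix t s -> exists a z', x ++ t ++ z = a :: z'.
Proof.
case: x => [|a x] /=; last by exists a, (x ++ t ++ z).
case: t => [|a t] /=; first by rewrite prefix0s.
by exists a, (t ++ z).
Qed.

Lemma sbar_k_hit rho (s : seq Act) k j t z v : v <> vend -> 0 < k -> size t <= size s -> ~~ prefix t s ->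
  den rho (sbar_k s k (yn Act)) v (s ++ spow s j ++ t ++ z).
Proof.
move=> Hv Hk H1 H2.
case: k Hk => [|[|k']] // _.
- have [a [z' ->]] := nonempty (spow s j) z H2; exact: sbar_hit_ext.
- rewrite catA -spowS /=.
  have -> : k'.+2 - 2 = k' by rewrite subn2.
  case: (ltngtP j k') => Hj.
  + left; apply: (@den_bigsum _ _ _ (prefs (spow s j.+1) (sbar_le s (yn Act)))).
      apply: In_map; apply: mem_In; rewrite mem_iota; apply/andP; split => //.
    apply: den_prefs; exact: sbar_le_hit.
  + right.
    have [d Ed] : exists d, j = k' + d.+1 by exists (j - k').-1; lia.
    rewrite Ed -addSn spow_add -catA.
    apply: den_prefs; rewrite spowS -catA.
    have [a [z' ->]] := nonempty (spow s d) z H2; exact: sbar_hit_ext.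
  + subst j; right; apply: den_prefs; left; exact: sbar_le_hit.
Qed.
End S3.

Section T.
Variable Act : finType.
Implicit Types (rho : nat -> verdict -> seq Act -> Prop).

Lemma O2_sound rho (s : seq Act) k v w : good rho -> v <> vend -> 0 < k ->
  den rho (Sum (Sum (vx Act) (prefs s (vx Act))) (sbar_k s k (yn Act))) v w <->
  den rho (Sum (vx Act) (sbar_k s k (yn Act))) v w.
Proof.
move=> G Hv Hk /=; split; last by case=> H; [left; left|right].
case=> [[H|H]|H]; [by left| |by right].
have [u [-> Hu]] := den_prefs_inv H.
case: (decomp s u) => [/prefixP [r Er]|[j [t [z [-> [H1 H2]]]]]].
- by left; rewrite Er; apply: G.
- right; exact: sbar_k_hit.
Qed.

Lemma ax_sound rho (l r : mon Act) v w : good rho -> v <> vend -> Evf' l r ->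
  (den rho l v w <-> den rho r v w).
Proof.
move=> G Hv; have Hv' : vend <> v by move=> E; apply: Hv; rewrite E.
case => /=.
- tauto.
- tauto.
- tauto.
- split; [case => // E; by rewrite E in Hv|by left].
- intros a0. destruct w as [|b w0]; simpl; tauto.
- intros a0. destruct w as [|b w0]; simpl; tauto.
- intros a0. destruct w as [|b w0]; simpl; tauto.
- intros a0. destruct w as [|b w0]; simpl; tauto.
- have := yn_all rho w Hv => /= H; tauto.
- move=> s k Hk; exact: O2_sound.
Qed.

Lemma sound (m n : mon Act) : derivable (@Evf' Act) m n ->
  forall rho, good rho -> forall v, v <> vend -> forall w, den rho m v w <-> den rho n v w.
Proof.
elim=> {m n}.
- move=> l r H rho G v Hv w; exact: ax_sound.
- by [].
- move=> m n _ IH rho G v Hv w; have := IH rho G v Hv w; tauto.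
- move=> m n p _ IH1 _ IH2 rho G v Hv w; have := IH1 rho G v Hv w; have := IH2 rho G v Hv w; tauto.
- move=> sigma m n _ IH rho G v Hv w.
  have G' : good (fun x => den rho (sigma x)) by move=> x v' w' u; apply: den_ext.
  have := den_subst rho sigma m v w; have := den_subst rho sigma n v w.
  have := IH _ G' v Hv w; tauto.
- move=> a m n _ IH rho G v Hv [|b w] //=; have := IH rho G v Hv w; tauto.
- move=> m m' n n' _ IH1 _ IH2 rho G v Hv w /=; have := IH1 rho G v Hv w; have := IH2 rho G v Hv w; tauto.
Qed.
End T.

Unset Implicit Arguments.

Theorem mainTheorem14 (Act : finType) (Act_nonempty : 0 < #|Act|)
  (m n : mon Act) :
  derivable (@Evf' Act) m n -> mequiv m n.
Proof.
move=> D sigma _.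
have key : forall v, v <> vend -> forall w,
    wtrace (subst sigma m) w (Verd Act v) <-> wtrace (subst sigma n) w (Verd Act v).
  move=> v Hv w.
  have := wtrace_den (subst sigma m) w v; have := wtrace_den (subst sigma n) w v.
  have := den_subst (@rho0 Act) sigma m v w; have := den_subst (@rho0 Act) sigma n v w.
  have G : good (fun x => den (@rho0 Act) (sigma x)) by move=> x v' w' u; apply: den_ext; exact: good0.
  have := sound D G Hv w; tauto.
by split => s; apply: key.
Qed.
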